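(* Let $n\ge3$ and let $i<j$ be integers with $i\ge-1$. Then for every $b\in\mathcal{N}_i$ and $b'\in\mathcal{N}_j$, the bracket $[b,b']$ is either $0$ or lies in the $\mathbb{Z}$-span $\mathbb{Z}\mathcal{N}_{j-1}$; that is, $[\mathcal{N}_i,\mathcal{N}_j]\subseteq\mathbb{Z}\mathcal{N}_{j-1}\cup\{0\}$.
   Context: Fix an integer $n\ge 3$. A partition is a sequence $\Lambda=(\lambda_j)_{j\ge1}$ of non-negative integers with finite support; $\mathrm{wt}(\Lambda)=\sum_j j\lambda_j$; $\mathrm{Part}(k)$ is the set of partitions with $\lambda_j=0$ for $j>k$. Write $x^\Lambda=\prod_j x_j^{\lambda_j}$, $\deg(x^\Lambda)=\sum_j\lambda_j$, and let $\partial_k$ be the partial derivative with respect to $x_k$. $\mathfrak{L}(n)$ is the free $\mathbb{Z}$-module with basis $\mathcal{B}=\{x^\Lambda\partial_k : 1\le k\le n,\ \Lambda\in\mathrm{Part}(k-1)\}$, a Lie ring with bracket defined on basis elements by $[x^\Lambda\partial_k,x^\Theta\partial_j]=\partial_j(x^\Lambda)x^\Theta\partial_k$ if $j<k$, $-x^\Lambda\partial_k(x^\Theta)\partial_j$ if $j>k$, $0$ if $j=k$, extended bilinearly. For an integer $i\ge-1$, let $r_i\in\{1,\dots,n-1\}$ with $i\equiv r_i\pmod{n-1}$ and $h_i=\lfloor (i-1)/(n-1)\rfloor+1$. Define $\mathrm{WD}(x^\Lambda\partial_k)=\mathrm{wt}(\Lambda)-\deg(x^\Lambda)+n-k$ and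 $\mathrm{lev}_i(x^\Lambda\partial_k)=h_i\,\mathrm{WD}(x^\Lambda\partial_k)+\deg(x^\Lambda)-1$. For $i\ge-1$, $\mathcal{N}_i=\{b\in\mathcal{B}: \mathrm{lev}_j(b)\le j\text{ for some integer } -1\le j\le i\}$; $\mathbb{Z}\mathcal{N}_i$ is its $\mathbb{Z}$-span in $\mathfrak{L}(n)$. *)

(* Defs.v *)
From mathcomp Require Import all_boot all_order all_algebra.
Set Implicit Arguments. Unset Strict Implicit. Unset Printing Implicit Defensive.
Import Order.TTheory GRing.Theory Num.Theory.
Local Open Scope ring_scope.

(* A basis monomial x^Lambda d_k is encoded as the pair (k, s) where
   s = [:: lambda_1; ...; lambda_(k-1)] (so Lambda in Part(k-1) is encoded
   canonically by a sequence of length exactly k-1). *)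
Definition bas := (nat * seq nat)%type.

Definition is_basis (n : nat) (b : bas) : bool :=
  ((1 <= b.1)%N && (b.1 <= n)%N) && (size b.2 == b.1.-1).

Definition lam (s : seq nat) (j : nat) : nat := nth 0%N s j.-1.

Definition wt (s : seq nat) : nat := (\sum_(t < size s) t.+1 * nth 0 s t)%N.
Definition degm (s : seq nat) : nat := sumn s.

(* Elements of L(n) (as a free Z-module on B): Z-valued coefficient functions. *)
Definition elt := bas -> int.
Definition bvec (b : bas) : elt := fun x => (x == b)%:Z.
Definition zero_elt : elt := fun _ => 0.
Definition scale_elt (c : int) (v : elt) : elt := fun x => c * v x.

(* Bracket on basis elements:
   [x^L d_k, x^T d_j] = d_j(x^L) x^T d_k          if j < k
                      = - x^L d_k(x^T) d_j        if j > k
                      = 0                         if j = k. *)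
Definition bracket (b b' : bas) : elt :=
  let (k, L) := b in let (j, T) := b' in
  if (j < k)%N then
    scale_elt (lam L j)%:Z
      (bvec (k, mkseq (fun t => (nth 0 L t + nth 0 T t - (t == j.-1))%N) k.-1))
  else if (k < j)%N then
    scale_elt (- (lam T k)%:Z)
      (bvec (j, mkseq (fun t => (nth 0 L t + nth 0 T t - (t == k.-1))%N) j.-1))
  else zero_elt.

Definition hh (n : nat) (i : int) : int := ((i - 1) %/ (n%:Z - 1))%Z + 1.

Definition WD (n : nat) (b : bas) : int :=
  (wt b.2)%:Z - (degm b.2)%:Z + n%:Z - (b.1)%:Z.

Definition lev (n : nat) (i : int) (b : bas) : int :=
  hh n i * WD n b + (degm b.2)%:Z - 1.

Definition Nset (n : nat) (i : int) (b : bas) : Prop :=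
  is_basis n b /\ exists j : int, -1 <= j /\ j <= i /\ lev n j b <= j.

Definition inZspan (n : nat) (P : bas -> Prop) (v : elt) : Prop :=
  exists s : seq (int * bas),
    (forall p, p \in s -> is_basis n p.2 /\ P p.2) /\
    forall x, v x = \sum_(p <- s) p.1 * bvec p.2 x.

(* Main.v *)
Require Import Defs.
From mathcomp Require Import all_boot all_order all_algebra zify.
Import Order.TTheory GRing.Theory Num.Theory.

Lemma sumn_nth (s : seq nat) : sumn s = (\sum_(t < size s) nth 0 s t)%N.
Proof.
elim: s => [|x s IH] /=; first by rewrite big_ord0.
by rewrite big_ord_recl /= IH.
Qed.

Lemma sum_pad (F : nat -> nat -> nat) (s : seq nat) N :
  (size s <= N)%N -> (forall t, F t 0 = 0)%N ->
  (\sum_(t < N) F t (nth 0 s t) = \sum_(t < size s) F t (nth 0 s t))%N.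
Proof.
move=> sN F0; rewrite -(subnKC sN) big_split_ord /= [X in (_ + X)%N]big1 ?addn0 //.
by move=> t _; rewrite nth_default ?F0 // leq_addr.
Qed.

Lemma deg_pad (s : seq nat) N : (size s <= N)%N ->
  degm s = (\sum_(t < N) nth 0 s t)%N.
Proof.
move=> sN; rewrite /degm sumn_nth; symmetry.
exact: (sum_pad (fun _ x => x) s N sN (fun _ => erefl)).
Qed.

Lemma wt_pad (s : seq nat) N : (size s <= N)%N ->
  wt s = (\sum_(t < N) t.+1 * nth 0 s t)%N.
Proof.
move=> sN; rewrite /wt; symmetry.
by apply: (sum_pad (fun t x => t.+1 * x)%N s N sN) => t; rewrite muln0.
Qed.

Lemma deg_mk f N : degm (mkseq f N) = (\sum_(t < N) f t)%N.
Proof.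
rewrite (deg_pad (mkseq f N) N) ?size_mkseq //.
by apply: eq_bigr => t _; rewrite nth_mkseq.
Qed.

Lemma wt_mk f N : wt (mkseq f N) = (\sum_(t < N) t.+1 * f t)%N.
Proof.
rewrite (wt_pad (mkseq f N) N) ?size_mkseq //.
by apply: eq_bigr => t _; rewrite nth_mkseq.
Qed.

Lemma wsum (w F : nat -> nat) N r : (r < N)%N -> (0 < F r)%N ->
  (\sum_(t < N) w t * (F t - (nat_of_ord t == r)) + w r = \sum_(t < N) w t * F t)%N.
Proof.
move=> rN Fr.
rewrite (bigD1 (Ordinal rN)) //= [RHS](bigD1 (Ordinal rN)) //= eqxx.
have -> : (\sum_(i < N | i != Ordinal rN) w i * (F i - (nat_of_ord i == r)) =
          \sum_(i < N | i != Ordinal rN) w i * F i)%N.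
  apply: eq_bigr => t tn.
  have -> : (nat_of_ord t == r) = false.
    by apply/negbTE; apply: contra tn => /eqP e; apply/eqP/val_inj.
  by rewrite subn0.
set X := (\sum_(_ < _ | _) _)%N.
have : (w r <= w r * F r)%N by rewrite leq_pmulr.
rewrite mulnBr muln1; lia.
Qed.

Lemma mk_sums (L T : seq nat) N r : (size L <= N)%N -> (size T <= N)%N ->
  (r < N)%N -> (0 < nth 0 L r + nth 0 T r)%N ->
  let S := mkseq (fun t => nth 0 L t + nth 0 T t - (t == r))%N N in
  (degm S + 1 = degm L + degm T)%N /\ (wt S + r.+1 = wt L + wt T)%N.
Proof.
move=> sL sT rN pos S; split.
  rewrite /S deg_mk (deg_pad L N sL) (deg_pad T N sT) -big_split /=.
  have := wsum (fun _ => 1%N) (fun t => nth 0 L t + nth 0 T t)%N N r rN pos.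
  rewrite /=. under eq_bigr do rewrite mul1n. move=> ->.
  by apply: eq_bigr => t _; rewrite mul1n.
rewrite /S wt_mk (wt_pad L N sL) (wt_pad T N sT) -big_split /=.
rewrite [RHS](eq_bigr (fun t : 'I_N => t.+1 * (nth 0 L t + nth 0 T t)))%N; last first.
  by move=> t _; rewrite mulnDr.
exact: (wsum (fun t => t.+1) (fun t => nth 0 L t + nth 0 T t)%N N r rN pos).
Qed.

Local Open Scope ring_scope.
Lemma mul_ge0' (x y : int) : 0 <= x -> 0 <= y -> 0 <= x * y.
Proof. exact: mulr_ge0. Qed.

Lemma arith (p A A' a a' H0 H1 Hj i0 j0 j : int) :
  2 <= p -> 0 <= a -> 0 <= a' -> 0 <= A -> 0 <= A' ->
  (a <= 1 -> A + a <= p) -> (a' <= 1 -> A' + a' <= p) ->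
  0 <= A + A' - p ->
  (H0 - 1) * p <= i0 - 1 -> i0 - 1 <= H0 * p - 1 ->
  (H1 - 1) * p <= j0 - 1 -> j0 - 1 <= H1 * p - 1 ->
  (Hj - 1) * p <= j - 1 - 1 -> j - 1 - 1 <= Hj * p - 1 ->
  H0 * A + a - 1 <= i0 -> H1 * A' + a' - 1 <= j0 ->
  -1 <= i0 -> i0 < j -> -1 <= j0 -> j0 <= j ->
  (0 <= H0) -> (0 <= H1) ->
  ((-1 <= i0 /\ i0 <= j - 1 /\ H0 * (A + A' - p) + (a + a' - 1) - 1 <= i0) \/
   (-1 <= j0 /\ j0 <= j - 1 /\ H1 * (A + A' - p) + (a + a' - 1) - 1 <= j0) \/
   (-1 <= j - 1 /\ j - 1 <= j - 1 /\ Hj * (A + A' - p) + (a + a' - 1) - 1 <= j - 1)).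
Proof.
move=> p2 a0 a'0 A0 A'0 sA sA' W0 h0l h0u h1l h1u hjl hju l0 l1 i0m i0j j0m j0j H00 H10.
rewrite !mulrBr !mulrDr in h0l h1l hjl *.
rewrite !mulrBl !mul1r in h0l h1l hjl.
have e0 : H0 * A - H0 * p + a <= 1 by lia.
have e1 : H1 * A' - H1 * p + a' <= 1 by lia.
have Ap : A <= p.
  case: (lerP A p) => // Agt.
  have : 0 <= H0 * (A - p) by apply: mul_ge0'; lia.
  rewrite mulrBr => ?.
  have : a <= 1 by lia. by move/sA; lia.
have A'p : A' <= p.
  case: (lerP A' p) => // Agt.
  have : 0 <= H1 * (A' - p) by apply: mul_ge0'; lia.
  rewrite mulrBr => ?.
  have : a' <= 1 by lia. by move/sA'; lia.
case: (lerP H1 H0) => hc.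
  left; split=> //; split; first lia.
  have : 0 <= (H0 - H1) * (p - A') by apply: mul_ge0'; lia.
  rewrite mulrBr !mulrBl => ?; lia.
case: (ltrP j0 j) => jc.
  right; left; split=> //; split; first lia.
  have : 0 <= (H1 - H0) * (p - A) by apply: mul_ge0'; lia.
  rewrite mulrBr !mulrBl => ?; lia.
have jj : j0 = j by lia.
subst j0.
right; right; split; first lia; split; first lia.
have hj1 : Hj <= H1.
  case: (lerP Hj H1) => // hg.
  have : 0 <= (Hj - 1 - H1) * p by apply: mul_ge0'; lia.
  rewrite !mulrBl => ?; lia.
have hj2 : H1 - 1 <= Hj.
  case: (lerP (H1 - 1) Hj) => // hg.
  have : 0 <= (H1 - 2 - Hj) * p by apply: mul_ge0'; lia.
  rewrite !mulrBl => ?; lia.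
case: (lerP H1 Hj) => hjc.
  have -> : Hj = H1 by lia.
  case: (ltrP A p) => Ac.
    have : 1 <= (H1 - H0) * (p - A) by apply: mulr_ege1; lia.
    rewrite mulrBr !mulrBl => ?; lia.
  have AE : A = p by lia.
  subst A.
  have : a <= 1 by lia.
  move/sA => ?. have -> : a = 0 by lia.
  lia.
have -> : Hj = H1 - 1 by lia.
have : 0 <= (H1 - 1 - H0) * (p - A) by apply: mul_ge0'; lia.
rewrite !mulrBr !mulrBl !mul1r => ?.
case: (ltrP 0 A') => A'c.
  lia.
have AE' : A' = 0 by lia.
subst A'.
have AE : A = p by lia.
subst A.
have : a <= 1 by lia.
move/sA => ?. have -> : a = 0 by lia.
lia.
Qed.
Lemma hh_bounds n (x : int) : (3 <= n)%N -> -1 <= x ->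
  (hh n x - 1) * (n%:Z - 1) <= x - 1 /\ x - 1 <= hh n x * (n%:Z - 1) - 1 /\ 0 <= hh n x.
Proof.
move=> n3 xm; rewrite /hh addrK.
set p := n%:Z - 1. have p2 : 2 <= p by rewrite /p; lia.
set q := ((x - 1) %/ p)%Z.
have e := divz_eq (x-1) p.
have r0 : 0 <= ((x-1) %% p)%Z by apply: modz_ge0; lia.
have r1 : ((x-1) %% p)%Z < p by apply: ltz_pmod; lia.
rewrite -/q in e.
split; first lia. split; first (rewrite mulrDl mul1r; lia).
case: (lerP 0 (q+1)) => // qn.
have : q * p <= -2 * p by rewrite ler_pM2r; lia.
lia.
Qed.
Lemma basis_fact n b : is_basis n b ->
  0 <= WD n b /\ ((degm b.2 <= 1)%N -> WD n b + (degm b.2)%:Z <= n%:Z - 1).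
Proof.
case: b => k s /andP [/andP [k1 kn] /eqP sk]; rewrite /WD /= in k1 kn sk *.
have h1 : (degm s <= wt s)%N.
  rewrite (deg_pad s (size s)) // (wt_pad s (size s)) //.
  by apply: leq_sum => t _; rewrite leq_pmull.
have h2 : (wt s <= (k - 1) * degm s)%N.
  rewrite (deg_pad s (size s)) // (wt_pad s (size s)) // big_distrr /=.
  apply: leq_sum => t _; apply: leq_mul => //.
  have := ltn_ord t; move: (nat_of_ord t) => u; rewrite sk -subn1. lia.
split; first lia.
move=> d1; have [d0|d0] : (degm s = 0 \/ degm s = 1)%N by lia.
  by rewrite d0 muln0 in h2; rewrite d0; lia.
by rewrite d0 muln1 in h2; rewrite d0; lia.
Qed.

Lemma finish n (i j : int) b b' c : (3 <= n)%N -> -1 <= i -> i < j ->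
  Nset n i b -> Nset n j b' -> is_basis n c ->
  WD n c = WD n b + WD n b' - (n%:Z - 1) ->
  (degm c.2)%:Z = (degm b.2)%:Z + (degm b'.2)%:Z - 1 -> Nset n (j - 1) c.
Proof.
move=> n3 im ij [bb [i0 [i0m [i0i l0]]]] [bb' [j0 [j0m [j0j l1]]]] bc eW eD.
have [A0 sA] := basis_fact _ _ bb. have [A'0 sA'] := basis_fact _ _ bb'.
have [W0 _] := basis_fact _ _ bc.
have [h0l [h0u H00]] := hh_bounds _ _ n3 i0m.
have [h1l [h1u H10]] := hh_bounds _ _ n3 j0m.
have jm : -1 <= j - 1 by lia.
have [hjl [hju _]] := hh_bounds _ _ n3 jm.
rewrite /lev in l0 l1.
have := arith (n%:Z - 1) (WD n b) (WD n b') (degm b.2)%:Z (degm b'.2)%:Z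
   (hh n i0) (hh n j0) (hh n (j - 1)) i0 j0 j.
case.
- lia.
- lia.
- lia.
- exact: A0.
- exact: A'0.
- by move=> h; apply: sA; lia.
- by move=> h; apply: sA'; lia.
- by rewrite -eW.
- exact: h0l.
- exact: h0u.
- exact: h1l.
- exact: h1u.
- exact: hjl.
- exact: hju.
- exact: l0.
- exact: l1.
- exact: i0m.
- lia.
- exact: j0m.
- exact: j0j.
- exact: H00.
- exact: H10.
- move=> [a1 [a2 a3]]; split=> //; exists i0; split=> //; split=> //.
  by rewrite /lev eW eD.
move=> [[a1 [a2 a3]]|[a1 [a2 a3]]]; split=> //.
  by exists j0; split=> //; split=> //; rewrite /lev eW eD.
by exists (j - 1); split=> //; split=> //; rewrite /lev eW eD.
Qed.

Theorem lemma3p1 (n : nat) (i j : int) (b b' : bas) :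
  (3 <= n)%N -> -1 <= i -> i < j ->
  Nset n i b -> Nset n j b' ->
  (forall x, bracket b b' x = 0) \/ inZspan n (Nset n (j - 1)) (bracket b b').
Proof.
move=> n3 im ij Nb Nb'.
have Nb0 := Nb; have Nb'0 := Nb'.
case: Nb => bb _; case: Nb' => bb' _.
case: b bb Nb0 => k L bb Nb0; case: b' bb' Nb'0 => m T bb' Nb'0.
move: (bb) (bb') => /andP [/andP [k1 kn] /eqP sL] /andP [/andP [m1 mn] /eqP sT].
rewrite /= in k1 kn sL m1 mn sT.
rewrite /bracket.
case: (ltnP m k) => mk.
  set c := lam L m.
  case: (c =P 0%N) => c0.
    by left => x; rewrite /scale_elt c0 mul0r.
  right.
  set S := mkseq _ _.
  have bS : is_basis n (k, S) by rewrite /is_basis /= size_mkseq k1 kn eqxx.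
  have [eD eW] := @mk_sums L T k.-1 m.-1 (eq_leq sL) (ltac:(rewrite sT; lia))
     (ltac:(lia)) (ltac:(move: c0; rewrite /c /lam; lia)).
  exists [:: (c%:Z, (k, S))]; split.
    move=> p; rewrite mem_seq1 => /eqP -> /=; split=> //.
    apply: (finish _ _ _ _ _ _ n3 im ij Nb0 Nb'0 bS).
      rewrite /WD /= -/S; move: eD eW; rewrite -/S; lia.
    rewrite /= -/S; move: eD; rewrite -/S; lia.
  by move=> x; rewrite big_seq1.
case: (ltnP k m) => km.
  set c := lam T k.
  case: (c =P 0%N) => c0.
    by left => x; rewrite /scale_elt c0 oppr0 mul0r.
  right.
  set S := mkseq _ _.
  have bS : is_basis n (m, S) by rewrite /is_basis /= size_mkseq m1 mn eqxx.
  have [eD eW] := @mk_sums L T m.-1 k.-1 (ltac:(rewrite sL; lia)) (eq_leq sT)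
     (ltac:(lia)) (ltac:(move: c0; rewrite /c /lam; lia)).
  exists [:: ((- c%:Z), (m, S))]; split.
    move=> p; rewrite mem_seq1 => /eqP -> /=; split=> //.
    apply: (finish _ _ _ _ _ _ n3 im ij Nb0 Nb'0 bS).
      rewrite /WD /= -/S; move: eD eW; rewrite -/S; lia.
    rewrite /= -/S; move: eD; rewrite -/S; lia.
  by move=> x; rewrite big_seq1.
by left.
Qed.
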